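(* Let $\mathcal F=(f_t)$ be a continuous flow on a compact metric space $(X,d)$, and suppose $\nu$ is an $(\mathcal F\times\mathcal F)$-invariant Borel probability measure on $X\times X$ which is product expansive at scale $\varepsilon$. Let $\gamma\in(0,\varepsilon/2)$ and for each $t>0$ let $\mathscr A_t$ be a partition adapted to a $(t,\gamma)$-separated set of maximal cardinality. Let $Q\subset X\times X$ be a measurable set with $(f_t\times f_s)Q=Q$ for all $t,s\in\mathbb{R}$. Then for every $\alpha>0$ there exists $t_0$ such that for every $t\ge t_0$ there is a set $U$ which is a union of elements of $\mathscr A_t$ with $\nu(U\triangle Q)<\alpha$.
   Context: $X\times X$ has metric $\tilde d((x,y),(w,z))=\max\{d(x,w),d(y,z)\}$ and product flow $(f_t\times f_t)$; Bowen balls $B_t(p,r)=\{q:\tilde d((f_s\times f_s)p,(f_s\times f_s)q)<r\ \forall s\in[0,t]\}$. A partition $\mathscr A$ is adapted to a maximal $(t,\gamma)$-separated set $E$ if each element $A$ satisfies $B_t(p,\gamma/2)\subset A\subset\overline{B_t}(p,\gamma)$ for some $p\in E$. Product expansive at scale $\varepsilon$: $\nu(\mathrm{NE}^\times(\varepsilon))=0$, where $\Gamma_\varepsilon(x,y)=\{(x',y'):\tilde d((f_tx,f_ty),(f_tx',f_ty'))<\varepsilon\ \forall t\in\mathbb{R}\}$ and $\mathrm{NE}^\times(\varepsilon)=\{(x,y):\Gamma_\varepsilon(x,y)\not\subset f_{[-s,s]}(x)\times f_{[-s,s]}(y)\text{ for any }s>0\}$, with $f_{[-s,s]}(x)=\{f_rx:r\in[-s,s]\}$.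 *)

(* Defs.v *)
From HB Require Import structures.
From mathcomp Require Import all_boot all_order all_algebra.
From mathcomp Require Import all_classical all_reals all_analysis.
Set Implicit Arguments. Unset Strict Implicit. Unset Printing Implicit Defensive.
Import Order.TTheory GRing.Theory Num.Theory.
Local Open Scope classical_set_scope.
Local Open Scope ring_scope.

Section Defs.
Context {R : realType}.

Definition is_metric {T : Type} (d : T -> T -> R) : Prop :=
  (forall x y, 0 <= d x y) /\ (forall x y, d x y = 0 <-> x = y) /\
  (forall x y, d x y = d y x) /\ (forall x y z, d x z <= d x y + d y z).

Definition dopen {T : Type} (d : T -> T -> R) (A : set T) : Prop :=
  forall x, A x -> exists2 r, 0 < r & forall y, d x y < r -> A y.

Definition dcompact {T : Type} (d : T -> T -> R) : Prop :=
  forall (I : Type) (U : I -> set T), (forall i, dopen d (U i)) ->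
  (forall x, exists i, U i x) ->
  exists2 J : set I, finite_set J & forall x, exists2 i, J i & U i x.

Definition is_cont_flow {T : Type} (d : T -> T -> R) (f : R -> T -> T) : Prop :=
  (forall x, f 0 x = x) /\ (forall t s x, f (t + s) x = f t (f s x)) /\
  (forall t x (e : R), 0 < e -> exists2 del, 0 < del & forall t' x',
      `|t - t'| < del -> d x x' < del -> d (f t x) (f t' x') < e).

Definition dprod {T : Type} (d : T -> T -> R) (p q : T * T) : R :=
  Num.max (d p.1 q.1) (d p.2 q.2).

Definition pflow {T : Type} (f : R -> T -> T) (t : R) (p : T * T) : T * T :=
  (f t p.1, f t p.2).

Definition Borel2 {T : Type} (d : T -> T -> R) : set (set (T * T)) :=
  dopen (dprod d).

Definition bowen {T : Type} (d : T -> T -> R) (f : R -> T -> T) (t : R)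
  (p : T * T) (r : R) : set (T * T) :=
  [set q | forall s, 0 <= s <= t -> dprod d (pflow f s p) (pflow f s q) < r].
Definition cbowen {T : Type} (d : T -> T -> R) (f : R -> T -> T) (t : R)
  (p : T * T) (r : R) : set (T * T) :=
  [set q | forall s, 0 <= s <= t -> dprod d (pflow f s p) (pflow f s q) <= r].

Definition separated {T : Type} (d : T -> T -> R) (f : R -> T -> T) (t g : R)
  (E : set (T * T)) : Prop :=
  forall p q, E p -> E q -> p <> q ->
    exists2 s, 0 <= s <= t & g < dprod d (pflow f s p) (pflow f s q).

Definition max_separated {T : Type} (d : T -> T -> R) (f : R -> T -> T) (t g : R)
  (E : set (T * T)) : Prop :=
  separated d f t g E /\
  forall F : set (T * T), separated d f t g F -> (F #<= E)%card.

Definition is_partition {T : Type} (P : set (set (T * T))) : Prop :=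
  (forall A B, P A -> P B -> A `&` B !=set0 -> A = B) /\
  (forall p, exists2 A, P A & A p).

Definition adapted {T : Type} (d : T -> T -> R) (f : R -> T -> T) (t g : R)
  (E : set (T * T)) (P : set (set (T * T))) : Prop :=
  is_partition P /\
  forall A, P A -> exists2 p, E p &
    bowen d f t p (g / 2) `<=` A /\ A `<=` cbowen d f t p g.

Definition Gamma {T : Type} (d : T -> T -> R) (f : R -> T -> T) (e : R)
  (p : T * T) : set (T * T) :=
  [set q | forall t, dprod d (pflow f t p) (pflow f t q) < e].

Definition orbseg {T : Type} (f : R -> T -> T) (s : R) (x : T) : set T :=
  [set y | exists2 r, - s <= r <= s & y = f r x].

Definition NEx {T : Type} (d : T -> T -> R) (f : R -> T -> T) (e : R) : set (T * T) :=
  [set p | forall s, 0 < s ->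
     ~ (Gamma d f e p `<=` orbseg f s p.1 `*` orbseg f s p.2)].

End Defs.

(* Main.v *)
Require Import Defs.
From HB Require Import structures.
From mathcomp Require Import all_boot all_order all_algebra.
From mathcomp Require Import all_classical all_reals all_analysis.
From mathcomp Require Import lra.
Import Order.TTheory GRing.Theory Num.Theory.
Local Open Scope classical_set_scope.
Local Open Scope ring_scope.
Import numFieldNormedType.Exports.


Section Gen.
Context {R : realType}.

Lemma seq_min (I : eqType) (s : seq I) (g : I -> R) :
  (forall i, i \in s -> 0 < g i) ->
  exists2 m : R, 0 < m & forall i, i \in s -> m <= g i.
Proof.
elim: s => [|a s IH] H; first by exists 1.
have [m m0 Hm] := IH (fun i hi => H i ltac:(by rewrite in_cons hi orbT)).
have ga := H a (mem_head a s).
exists (Num.min (g a) m); first by rewrite lt_min ga m0.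
move=> i; rewrite in_cons => /orP[/eqP->|hi]; first by rewrite ge_min lexx.
by rewrite ge_min Hm ?orbT.
Qed.

Lemma seq_max (I : eqType) (s : seq I) (g : I -> R) :
  exists m : R, forall i, i \in s -> g i <= m.
Proof.
elim: s => [|a s [m Hm]]; first by exists 0.
exists (Num.max (g a) m) => i; rewrite in_cons => /orP[/eqP->|hi].
  by rewrite le_max lexx.
by rewrite le_max Hm ?orbT.
Qed.

Lemma finite_min (I : choiceType) (J : set I) (g : I -> R) :
  finite_set J -> (forall i, J i -> 0 < g i) ->
  exists2 m : R, 0 < m & forall i, J i -> m <= g i.
Proof.
move=> fJ H.
have [m m0 Hm] := @seq_min _ (finmap.enum_fset (fset_set J)) g
  (fun i hi => H i ltac:(by move: hi; rewrite in_fset_set // inE)).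
exists m => // i Ji; apply: Hm; rewrite in_fset_set // inE //.
Qed.

Lemma finite_max (I : choiceType) (J : set I) (g : I -> R) :
  finite_set J -> exists m : R, forall i, J i -> g i <= m.
Proof.
move=> fJ; have [m Hm] := @seq_max _ (finmap.enum_fset (fset_set J)) g.
exists m => i Ji; apply: Hm; rewrite in_fset_set // inE //.
Qed.

Lemma ev_lt (u : nat -> \bar R) (e : R) :
  u @ \oo --> 0%:E -> 0 < e -> exists N, (u N < e%:E)%E.
Proof.
move=> /fine_cvgP [Hf Hc] e0.
have H2 : \forall t \near \oo, (fine \o u) t < e := cvgr_lt 0 Hc e e0.
have [N _ HN] := filterI Hf (H2 _).
exists N; have [h1 h2] := HN N (leqnn N).
by rewrite -(fineK h1) lte_fin.
Qed.

End Gen.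


Set Default Proof Using "All".
Section Met.
Context {R : realType} {X : pointedType} (d : X -> X -> R).
Context (dm : is_metric d).

Lemma d_ge0 x y : 0 <= d x y. Proof. by case: dm. Qed.
Lemma d_xx x : d x x = 0. Proof. by case: dm => _ [h _]; apply/h. Qed.
Lemma d_sym x y : d x y = d y x. Proof. by case: dm => _ [_ []]. Qed.
Lemma d_tri x y z : d x z <= d x y + d y z. Proof. by case: dm => _ [_ []]. Qed.

Lemma dprod_ge0 p q : 0 <= dprod d p q.
Proof. by rewrite /dprod le_max d_ge0. Qed.
Lemma dprod_xx p : dprod d p p = 0.
Proof. by rewrite /dprod !d_xx maxxx. Qed.
Lemma dprod_sym p q : dprod d p q = dprod d q p.
Proof. by rewrite /dprod d_sym [d p.2 _]d_sym. Qed.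
Lemma dprod_tri p q r : dprod d p r <= dprod d p q + dprod d q r.
Proof.
rewrite /dprod ge_max; apply/andP; split.
  apply: (le_trans (d_tri _ q.1 _)); apply: lerD; by rewrite le_max lexx.
apply: (le_trans (d_tri _ q.2 _)); apply: lerD; by rewrite le_max lexx ?orbT.
Qed.
Lemma dprod_lt p q e : (dprod d p q < e) <-> (d p.1 q.1 < e /\ d p.2 q.2 < e).
Proof. by rewrite /dprod gt_max; split => [/andP[]|[-> ->]]. Qed.
Lemma dprod_le p q e : (dprod d p q <= e) <-> (d p.1 q.1 <= e /\ d p.2 q.2 <= e).
Proof. by rewrite /dprod ge_max; split => [/andP[]|[-> ->]]. Qed.

Lemma dball_open x r : dopen d [set y | d x y < r].
Proof.
move=> y /= hy; exists (r - d x y); first by rewrite subr_gt0.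
move=> z hz; apply: (le_lt_trans (d_tri _ y _)).
by rewrite -ltrBrDl.
Qed.

Lemma pball_open p r : dopen (dprod d) [set q | dprod d p q < r].
Proof.
move=> y /= hy; exists (r - dprod d p y); first by rewrite subr_gt0.
move=> z hz; apply: (le_lt_trans (dprod_tri _ y _)).
by rewrite -ltrBrDl.
Qed.

End Met.
Arguments d_ge0 {R X d}.
Arguments d_xx {R X d}.
Arguments d_sym {R X d}.
Arguments d_tri {R X d}.
Arguments dprod_ge0 {R X d}.
Arguments dprod_xx {R X d}.
Arguments dprod_sym {R X d}.
Arguments dprod_tri {R X d}.
Arguments dprod_lt {R X d}.
Arguments dprod_le {R X d}.
Arguments dball_open {R X d}.
Arguments pball_open {R X d}.

Section Flow.
Context {R : realType} {X : pointedType} (d : X -> X -> R) (f : R -> X -> X).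
Context (dm : is_metric d) (fl : is_cont_flow d f).

Lemma f0 x : f 0 x = x. Proof. by case: fl. Qed.
Lemma fD t s x : f (t + s) x = f t (f s x). Proof. by case: fl => _ []. Qed.
Lemma fK t x : f (- t) (f t x) = x.
Proof. by rewrite -fD addNr f0. Qed.
Lemma fKV t x : f t (f (- t) x) = x.
Proof. by rewrite -fD subrr f0. Qed.
Lemma pflowD t s p : pflow f t (pflow f s p) = pflow f (t + s) p.
Proof. by rewrite /pflow /= !fD. Qed.
Lemma pflowK t p : pflow f (- t) (pflow f t p) = p.
Proof. by case: p => a b; rewrite /pflow /= !fK. Qed.
Lemma pflowKV t p : pflow f t (pflow f (- t) p) = p.
Proof. by case: p => a b; rewrite /pflow /= !fKV. Qed.

Lemma fcont s x e : 0 < e ->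
  exists2 del, 0 < del & forall x', d x x' < del -> d (f s x) (f s x') < e.
Proof.
case: fl => _ [_ H] e0; have [del del0 Hd] := H s x e e0.
by exists del => // x' hx; apply: Hd => //; rewrite subrr normr0.
Qed.

Lemma pfcont s p e : 0 < e ->
  exists2 del, 0 < del & forall q, dprod d p q < del ->
     dprod d (pflow f s p) (pflow f s q) < e.
Proof.
move=> e0; have [d1 d10 H1] := fcont s p.1 e e0.
have [d2 d20 H2] := fcont s p.2 e e0.
exists (Num.min d1 d2); first by rewrite lt_min d10 d20.
move=> q /(dprod_lt dm) [h1 h2]; apply/(dprod_lt dm); split => /=.
  by apply: H1; apply: (lt_le_trans h1); rewrite ge_min lexx.
by apply: H2; apply: (lt_le_trans h2); rewrite ge_min lexx orbT.
Qed.

Lemma fucont a b x e : 0 < e ->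
  exists2 del, 0 < del & forall x', d x x' < del ->
    forall s, a <= s <= b -> d (f s x) (f s x') < e.
Proof.
move=> e0; case: fl => _ [_ H].
have e20 : 0 < e / 2 by rewrite divr_gt0.
have /choice [del Hdel] : forall s, exists dl, 0 < dl /\ forall t' x',
    `|s - t'| < dl -> d x x' < dl -> d (f s x) (f t' x') < e / 2.
  by move=> s; have [dl dl0 Hd] := H s x _ e20; exists dl.
have Hc := @segment_compact R a b.
have Hcc : forall (T : ptopologicalType) (A : set T), compact A -> cover_compact A by move=> T A; rewrite compact_cover.
have {}Hc := Hcc _ _ Hc.
have [D' HD' Hcov] := Hc R `[a, b]%classic (fun s => ball s (del s))
  (fun s _ => ball_open s (del s)) ltac:(move=> s hs; exists s => //; 
     exact: ball_center (PosNum (proj1 (Hdel s)))).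
have [m m0 Hm] := @seq_min _ _ (finmap.enum_fset D') del (fun i _ => proj1 (Hdel i)).
exists m => // x' hx s hs.
have : `[a, b]%classic s by rewrite /= in_itv /=.
move=> /Hcov [s0 hs0 hb].
have hb' : `|s0 - s| < del s0 by move: hb; rewrite -ball_normE /ball_.
have h1 := (proj2 (Hdel s0)) s x' hb' (lt_le_trans hx (Hm s0 hs0)).
have h2 := (proj2 (Hdel s0)) s x hb' ltac:(by rewrite (d_xx dm); exact: (proj1 (Hdel s0))).
apply: (le_lt_trans (d_tri dm _ (f s0 x) _)).
by rewrite (splitr e) (d_sym dm); apply: ltrD.
Qed.

Lemma pfucont a b p e : 0 < e ->
  exists2 del, 0 < del & forall q, dprod d p q < del ->
    forall s, a <= s <= b -> dprod d (pflow f s p) (pflow f s q) < e.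
Proof.
move=> e0; have [d1 d10 H1] := fucont a b p.1 e e0.
have [d2 d20 H2] := fucont a b p.2 e e0.
exists (Num.min d1 d2); first by rewrite lt_min d10 d20.
move=> q /(dprod_lt dm) [h1 h2] s hs; apply/(dprod_lt dm); split => /=.
  by apply: H1 => //; apply: (lt_le_trans h1); rewrite ge_min lexx.
by apply: H2 => //; apply: (lt_le_trans h2); rewrite ge_min lexx orbT.
Qed.

End Flow.
Arguments f0 {R X d f}.
Arguments fD {R X d f}.
Arguments fK {R X d f}.
Arguments fKV {R X d f}.
Arguments pflowD {R X d f}.
Arguments pflowK {R X d f}.
Arguments pflowKV {R X d f}.
Arguments fcont {R X d f}.
Arguments pfcont {R X d f}.
Arguments fucont {R X d f}.
Arguments pfucont {R X d f}.


Set Default Proof Using "All".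
Section Comp.
Context {R : realType} {X : pointedType} (d : X -> X -> R) (f : R -> X -> X).
Context (dm : is_metric d) (dc : dcompact d) (fl : is_cont_flow d f).

Lemma dcompact2 (I : Type) (U : I -> set (X * X)) :
  (forall i, dopen (dprod d) (U i)) -> (forall p, exists i, U i p) ->
  exists2 J : set I, finite_set J & forall p, exists2 i, J i & U i p.
Proof.
move=> Uo Uc.
have /choice [g Hg] : forall p : X * X, exists ir : I * R,
    0 < ir.2 /\ forall q, dprod d p q < ir.2 -> U ir.1 q.
  move=> p; have [i Ui] := Uc p; have [r r0 Hr] := Uo i p Ui.
  by exists (i, r).
have /choice [Jx HJx] : forall x : X, exists J : set X, finite_set J /\
    forall y, exists2 y0, J y0 & d y0 y < (g (x, y0)).2 / 2.
  move=> x.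
  have [J fJ HJ] := dc _ (fun y0 => [set y | d y0 y < (g (x, y0)).2 / 2])
    (fun y0 => dball_open dm y0 _)
    ltac:(by move=> y; exists y => /=; rewrite (d_xx dm) // divr_gt0 //; case: (Hg (x, y))).
  by exists J; split.
have /choice [rho Hrho] : forall x : X, exists r : R, 0 < r /\
    forall y0, Jx x y0 -> r <= (g (x, y0)).2 / 2.
  move=> x; have [r r0 Hr] := @finite_min R X (Jx x) (fun y0 => (g (x, y0)).2 / 2)
    (proj1 (HJx x)) ltac:(by move=> y0 _; rewrite divr_gt0 //; case: (Hg (x, y0))).
  by exists r.
have [J fJ HJ] := dc _ (fun x => [set x' | d x x' < rho x])
  (fun x => dball_open dm x _)
  ltac:(by move=> x; exists x => /=; rewrite (d_xx dm) //; case: (Hrho x)).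
exists (\bigcup_(x in J) [set (g (x, y0)).1 | y0 in Jx x]).
  apply: bigcup_finite => // x _; apply: finite_image; exact: (proj1 (HJx x)).
move=> [x' y']; have [x Jx0 hx] := HJ x'.
have [y0 Jy0 hy] := (proj2 (HJx x)) y'.
exists (g (x, y0)).1; first by exists x => //; exists y0.
case: (Hg (x, y0)) => r0 Hr; apply: Hr; apply/(dprod_lt dm); split => /=.
  apply: (lt_le_trans hx); apply: (le_trans ((proj2 (Hrho x)) y0 Jy0)).
  lra.
apply: (lt_le_trans hy); lra.
Qed.

Lemma limit_K (K : set (X * X)) p c : dopen (dprod d) (~` K) ->
  (forall n : nat, exists k, K k /\ forall s, - n%:R <= s <= n%:R ->
      dprod d (pflow f s p) (pflow f s k) <= c) ->
  exists k, K k /\ forall s, dprod d (pflow f s p) (pflow f s k) <= c.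
Proof.
move=> Ko Hn; apply: contrapT => Hno.
have /choice [sK HsK] : forall k : X * X, exists s : R,
    K k -> c < dprod d (pflow f s p) (pflow f s k).
  move=> k; case: (pselect (K k)) => Kk; last by exists 0.
  apply: contrapT => Hs; apply: Hno; exists k; split => // s.
  by rewrite leNgt; apply/negP => hlt; apply: Hs; exists s.
pose U (o : option (X * X)) : set (X * X) := match o with
  | None => ~` K
  | Some k => [set q | c < dprod d (pflow f (sK k) p) (pflow f (sK k) q)] end.
have Uo : forall o, dopen (dprod d) (U o).
  case => [k|] //= q hq.
  have m0 : 0 < dprod d (pflow f (sK k) p) (pflow f (sK k) q) - c by rewrite subr_gt0.
  have [del del0 Hdel] := pfcont dm fl (sK k) q _ m0.
  exists del => // q' hq'; have h := Hdel q' hq'.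
  have := dprod_tri dm (pflow f (sK k) p) (pflow f (sK k) q') (pflow f (sK k) q).
  rewrite (dprod_sym dm (pflow f (sK k) q')) => h2.
  rewrite /=; move: h h2; set a := dprod d _ _; set b := dprod d _ _; set z := dprod d _ _.
  move=> h h2; lra.
have Uc : forall q, exists o, U o q.
  move=> q; case: (pselect (K q)) => Kq; last by exists None.
  by exists (Some q) => /=; apply: HsK.
have [J fJ HJ] := @dcompact2 _ U Uo Uc.
pose g (o : option (X * X)) : R := match o with Some k => `|sK k| | None => 0 end.
have [M HM] := @finite_max R _ J g fJ.
have [k [Kk Hk]] := Hn (Num.trunc M).+1.
have [oi Jo Uok] := HJ k.
case: oi Jo Uok => [k0|] Jo /= Uok; last by [].
have hM := HM _ Jo; rewrite /g in hM.
have hs : - ((Num.trunc M).+1%:R) <= sK k0 <= (Num.trunc M).+1%:R.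
  rewrite -ler_norml; apply: (le_trans hM); apply: ltW; exact: truncnS_gt.
by move: (Hk _ hs); rewrite leNgt Uok.
Qed.

Definition Hset (K : set (X * X)) (c T : R) : set (X * X) :=
  [set p | exists k, K k /\ exists2 r, r < c & forall s, - T <= s <= T ->
      dprod d (pflow f s p) (pflow f s k) <= r].

Lemma Hset_open K c T : dopen (dprod d) (Hset K c T).
Proof.
move=> p [k [Kk [r rc Hr]]].
have e0 : 0 < (c - r) / 2 by rewrite divr_gt0 // subr_gt0.
have [del del0 Hdel] := pfucont dm fl (- T) T p _ e0.
exists del => // q hq; exists k; split => //; exists (r + (c - r) / 2).
  by rewrite -ltrBrDl ltr_pdivrMr // ltr_pMr ?subr_gt0 // ltr1n.
move=> s hs; apply: (le_trans (dprod_tri dm _ (pflow f s p) _)).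
rewrite addrC; apply: lerD; first exact: Hr.
by rewrite (dprod_sym dm) //; apply: ltW; apply: Hdel.
Qed.

Lemma Hset_mono K c (T T' : R) : T <= T' -> Hset K c T' `<=` Hset K c T.
Proof.
move=> TT p [k [Kk [r rc Hr]]]; exists k; split => //; exists r => // s /andP[h1 h2].
apply: Hr; apply/andP; split; [apply: le_trans h1; by rewrite lerN2 | exact: le_trans h2 TT].
Qed.

End Comp.
Arguments dcompact2 {R X d f}. Arguments limit_K {R X d f}.
Arguments Hset_open {R X d f}. Arguments Hset_mono {R X d f}.


Lemma decr_seq (T : Type) (G : nat -> set T) :
  (forall n, G n.+1 `<=` G n) -> nonincreasing_seq G.
Proof. by move=> h; apply/nonincreasing_seqP => n; rewrite subsetEset; exact: h. Qed.

Set Default Proof Using "All".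
Section Meas.
Context {R : realType} {X : pointedType} (d : X -> X -> R).
Context (dm : is_metric d).
Local Notation T := (g_sigma_algebraType (Borel2 d)).

Definition closedS (K : set (X * X)) := dopen (dprod d) (~` K).

Lemma open_meas {O : set T} : dopen (dprod d) O -> measurable O.
Proof. by move=> hO; apply: sub_gen_smallest. Qed.

Lemma closed_meas {K : set T} : closedS K -> measurable K.
Proof.
move=> hK; rewrite -(setCK K); apply: measurableC; exact: open_meas.
Qed.

Context (nu : probability T R).

Lemma nu_fin {A : set T} : measurable A -> (nu A < +oo)%E.
Proof. by move=> mA; apply: (le_lt_trans (probability_le1 nu mA)); rewrite ltry. Qed.

Lemma ev_small (G : nat -> set T) (e : R) : (forall n, measurable (G n)) ->
  (forall n, G n.+1 `<=` G n) -> \bigcap_n G n = set0 -> 0 < e ->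
  exists N, (nu (G N) < e%:E)%E.
Proof.
move=> mG dG cG e0.
have h : (nu \o G) @ \oo --> nu (\bigcap_n G n).
  apply: nonincreasing_cvg_mu.
  - exact: nu_fin.
  - exact: mG.
  - by rewrite cG.
  - exact: decr_seq.
rewrite cG measure0 in h; exact: ev_lt h e0.
Qed.

Definition apx (B : set T) := measurable B /\ forall e : R, 0 < e ->
  exists K O, [/\ closedS K, dopen (dprod d) O, K `<=` B, B `<=` O &
     (nu (O `\` K) < e%:E)%E].

Lemma apx_open (O : set T) : dopen (dprod d) O -> apx O.
Proof.
move=> hO; split; first exact: open_meas.
move=> e e0.
pose F (m : nat) : set T := [set p | forall q, dprod d p q < (m.+1%:R)^-1 -> O q].
have Fc m : closedS (F m).
  move=> p /= /existsNP [q /not_implyP [hq nOq]].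
  exists ((m.+1%:R)^-1 - dprod d p q); first by rewrite subr_gt0.
  move=> p' hp' hF; apply: nOq; apply: hF.
  apply: (le_lt_trans (dprod_tri dm _ p _)); rewrite dprod_sym //.
  by rewrite -ltrBrDr.
have FO m : F m `<=` O.
  by move=> p hp; apply: hp; rewrite dprod_xx // invr_gt0.
have dec : forall n, O `\` F n.+1 `<=` O `\` F n.
  move=> n p [Op nF]; split => // hF; apply: nF => q hq; apply: hF.
  apply: (lt_le_trans hq); rewrite lef_pV2 ?posrE // ler_nat //.
have cap : \bigcap_n (O `\` F n) = set0.
  apply/seteqP; split; last exact: sub0set.
  move=> p /= H.
  have [Op _] := H 0%N I.
  have [r r0 Hr] := hO p Op.
  have [_ nF] := H (Num.trunc (r^-1)) I.
  apply: nF => q hq; apply: Hr; apply: (lt_le_trans hq).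
  rewrite invf_ple ?posrE //; apply: ltW; exact: truncnS_gt.
have [N HN] := @ev_small (fun m => O `\` F m) e
  (fun m => measurableD (open_meas hO) (closed_meas (Fc m))) dec cap e0.
by exists (F N), O; split.
Qed.

End Meas.
Arguments open_meas {R X d}. Arguments closed_meas {R X d}.
Arguments nu_fin {R X d}. Arguments ev_small {R X d}. Arguments apx_open {R X d}.


Set Default Proof Using "All".
Section Reg.
Context {R : realType} {X : pointedType} (d : X -> X -> R).
Context (dm : is_metric d).
Local Notation T := (g_sigma_algebraType (Borel2 d)).
Context (nu : probability T R).

Lemma nu_le (A B : set T) : measurable A -> measurable B -> A `<=` B ->
  (nu A <= nu B)%E.
Proof. by move=> mA mB AB; apply: le_measure => //; rewrite inE. Qed.

Lemma closedS_fin (K : nat -> set (X * X)) N : (forall n, closedS d (K n)) ->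
  closedS d (\bigcup_(n in `I_N) K n).
Proof.
move=> hK p /= hp.
have /choice [r Hr] : forall n, exists r : R, 0 < r /\ ((n < N)%N ->
    forall q, dprod d p q < r -> ~ K n q).
  move=> n; case: (ltnP n N) => hn; last by exists 1.
  have [r r0 Hr] := hK n p (fun h => hp (ex_intro2 _ _ n hn h)).
  by exists r; split => // _ q /Hr.
have [m m0 Hm] := @seq_min R _ (iota 0 N) r (fun n _ => proj1 (Hr n)).
exists m => // q hq [n hn Kq].
have hn' : (n < N)%N by [].
apply: (proj2 (Hr n) hn' q _ Kq); apply: (lt_le_trans hq); apply: Hm.
by rewrite mem_iota add0n hn'.
Qed.

Lemma apx_sigma : sigma_algebra setT (apx d nu).
Proof.
split.
- split; first exact: measurable0.
  move=> e e0; exists set0, set0; split.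
  + by rewrite /closedS => p _; exists 1 => // y _ [].
  + by move=> p [].
  + by [].
  + by [].
  + by rewrite setD0 measure0 lte_fin.
- move=> B [mB HB]; split; first exact: measurableD.
  move=> e e0; have [K [U0 [hK hO KB BO hKO]]] := HB e e0.
  exists (~` U0), (~` K); split.
  + by rewrite /closedS setCK.
  + exact: hK.
  + by move=> p hp; split => // Bp; apply: hp; apply: BO.
  + by move=> p [_ nB] Kp; apply: nB; apply: KB.
  + suff -> : ~` K `\` ~` U0 = U0 `\` K by [].
    by apply/seteqP; split => p /= [h1 h2]; split => //; apply: contrapT.
- move=> B HB; split; first by apply: bigcupT_measurable => n; case: (HB n).
  move=> e e0; pose e2 := e / 2.
  have e20 : 0 < e2 by rewrite divr_gt0.
  have /choice [KO HKO] : forall n, exists ko : set T * set T,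
      [/\ closedS d ko.1, dopen (dprod d) ko.2, ko.1 `<=` B n, B n `<=` ko.2 &
       (nu (ko.2 `\` ko.1) < (e2 / (2 ^ n.+1)%:R)%:E)%E].
    move=> n; have [_ H] := HB n.
    have [K [U0 HKO]] := H (e2 / (2 ^ n.+1)%:R) ltac:(by rewrite divr_gt0 // ltr0n expn_gt0).
    by exists (K, U0).
  pose Bu := \bigcup_n B n.
  pose D N := Bu `\` \bigcup_(n in `I_N) B n.
  have mB n : measurable (B n) by case: (HB n).
  have mD N : measurable (D N).
    apply: measurableD; first exact: bigcupT_measurable.
    by apply: bigcup_measurable => k _.
  have decD N : D N.+1 `<=` D N.
    move=> p [hp nb]; split => // -[k hk Bk]; apply: nb; exists k => //.
    by rewrite /= ltnS ltnW.
  have capD : \bigcap_N D N = set0.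
    apply/seteqP; split; last exact: sub0set.
    move=> p /= H; have [[m _ Bm] _] := H 0%N I.
    have [_ nb] := H m.+1 I; apply: nb; by exists m => //=.
  have [N HN] := ev_small dm nu _ _ mD decD capD e20.
  pose K := \bigcup_(n in `I_N) (KO n).1.
  pose U0 := \bigcup_n (KO n).2.
  have hK : closedS d K by apply: closedS_fin => n; case: (HKO n).
  have hO : dopen (dprod d) U0.
    move=> p [n _ hp]; case: (HKO n) => _ hOn _ _ _.
    have [r r0 Hr] := hOn p hp; exists r => // q /Hr hq; by exists n.
  exists K, U0; split => //.
  + by move=> p [n _ hp]; case: (HKO n) => _ _ hs _ _; exists n => //; apply: hs.
  + by move=> p [n _ hp]; case: (HKO n) => _ _ _ hs _; exists n => //; apply: hs.
  pose W := \bigcup_n ((KO n).2 `\` (KO n).1).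
  have mKO n : measurable (KO n).1 /\ measurable (KO n).2.
    by case: (HKO n) => h1 h2 _ _ _; split; [exact: (closed_meas dm)|exact: (open_meas dm)].
  have mWn n : measurable ((KO n).2 `\` (KO n).1).
    by case: (mKO n) => h1 h2; apply: measurableD.
  have mW : measurable W by apply: bigcupT_measurable.
  have mO : measurable U0 by apply: bigcupT_measurable => n; case: (mKO n).
  have mK : measurable K by exact: (closed_meas dm).
  have sub : U0 `\` K `<=` D N `|` W.
    move=> p [[m _ Om] nK].
    case: (pselect ((\bigcup_(n in `I_N) B n) p)) => hb.
      right; case: hb => j hj Bj; exists j => //; split.
        by case: (HKO j) => _ _ _ hs _; apply: hs.
      by move=> Kj; apply: nK; exists j.
    case: (pselect (Bu p)) => hu; first by left.
    right; exists m => //; split => // Km; apply: hu; exists m => //.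
    by case: (HKO m) => _ _ hs _ _; apply: hs.
  have h1 : (nu (U0 `\` K) <= nu (D N) + nu W)%E.
    apply: le_trans (measureU2 nu (mD N) mW).
    apply: nu_le => //; [exact: measurableD | exact: measurableU].
  have h2 : (nu W <= e2%:E)%E.
    have hs := measure_sigma_subadditive nu mWn mW (@subset_refl _ W).
    apply: (le_trans hs).
    apply: (le_trans _ (epsilon_trick0 xpredT (ltW e20))).
    apply: lee_nneseries => n _ //; case: (HKO n) => _ _ _ _ /ltW //.
  apply: le_lt_trans h1 _.
  have -> : e = e2 + e2 by rewrite /e2; lra.
  rewrite EFinD; apply: lte_leD => //.
  rewrite ge0_fin_numE //; exact: (nu_fin dm nu).
Qed.

Lemma inner_reg (B : set T) (e : R) : measurable B -> 0 < e ->
  exists K, [/\ closedS d K, K `<=` B & (nu (B `\` K) < e%:E)%E].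
Proof.
move=> mB e0.
have hB : apx d nu B.
  apply: (smallest_sub apx_sigma _ mB) => U0 hO; exact: (apx_open dm nu).
have [_ H] := hB; have [K [U0 [hK hO KB BO hKO]]] := H e e0.
exists K; split => //; apply: le_lt_trans hKO.
apply: nu_le => //; first by apply: measurableD => //; exact: (closed_meas dm).
  by apply: measurableD; [exact: (open_meas dm) | exact: (closed_meas dm)].
by move=> p [Bp nK]; split => //; apply: BO.
Qed.

End Reg.
Arguments inner_reg {R X d}. Arguments nu_le {R X d}.


Set Default Proof Using "All".
Section Cells.
Context {R : realType} {X : pointedType} (d : X -> X -> R) (f : R -> X -> X).
Context (dm : is_metric d) (dc : dcompact d) (fl : is_cont_flow d f).
Local Notation T := (g_sigma_algebraType (Borel2 d)).

Lemma pflow_meas s (B : set T) : measurable B ->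
  measurable (pflow f s @^-1` B : set T).
Proof.
move=> mB.
have : <<s Borel2 d>> `<=` [set B : set T | measurable (pflow f s @^-1` B : set T)].
  apply: smallest_sub.
    split.
    - by rewrite /= preimage_set0; exact: measurable0.
    - by move=> A hA; exact: (measurableD measurableT hA).
    - move=> F hF; rewrite /= preimage_bigcup; by apply: bigcupT_measurable => n; apply: hF.
  move=> O hO; apply: (open_meas dm); move=> p /= hp.
  have [r r0 Hr] := hO _ hp.
  have [del del0 Hdel] := pfcont dm fl s p _ r0.
  by exists del => // q /Hdel /Hr.
by apply.
Qed.

Lemma net (r : R) : 0 < r -> exists l : seq (X * X),
  forall p, exists2 z, z \in l & dprod d z p < r.
Proof.
move=> r0.
have [J fJ HJ] := dcompact2 dm dc fl _ (fun z : X * X => [set q | dprod d z q < r])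
  (fun z => pball_open dm z r)
  ltac:(by move=> p; exists p => /=; rewrite (dprod_xx dm)).
exists (finmap.enum_fset (fset_set J)) => p.
have [z Jz hz] := HJ p; exists z => //.
by rewrite (in_fset_set fJ) inE.
Qed.

Lemma cells_meas (P : set (set (X * X))) (E : set (X * X)) (t g : R)
    (Sel : set (set (X * X))) :
  0 < g -> adapted d f t g E P -> (forall C, P C -> measurable (C : set T)) ->
  Sel `<=` P -> measurable (\bigcup_(C in Sel) C : set T).
Proof.
move=> g0 [[Pdis Pcov] Pad] Pm SP.
have /choice [l Hl] : forall j : nat, exists l : seq (X * X),
    forall p, exists2 z, z \in l & dprod d z p < (j.+1%:R)^-1.
  by move=> j; apply: net; rewrite invr_gt0.
pose W (j i : nat) : set T :=
  [set p | exists C, [/\ Sel C, C (nth point (l j) i) & C p]].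
have mW j i : measurable (W j i).
  case: (pselect (exists C, Sel C /\ C (nth point (l j) i))) => [[C0 [S0 C0z]]|hn].
    suff -> : W j i = C0 by apply: Pm; apply: SP.
    apply/seteqP; split => p.
      move=> [C [SC Cz Cp]].
      have <- // : C = C0.
      by apply: Pdis; [apply: SP | apply: SP | exists (nth point (l j) i)].
    by move=> hp; exists C0.
  suff -> : W j i = set0 by exact: measurable0.
  apply/seteqP; split => p // [C [SC Cz _]]; apply: hn; by exists C.
suff -> : \bigcup_(C in Sel) C = \bigcup_j \bigcup_i W j i.
  by apply: bigcupT_measurable => j; apply: bigcupT_measurable => i.
apply/seteqP; split => p.
  move=> [C SC Cp].
  have [c Ec [bC _]] := Pad C (SP C SC).
  have g20 : 0 < g / 2 by rewrite divr_gt0.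
  have [del del0 Hdel] := pfucont dm fl 0 t c _ g20.
  pose j := Num.trunc (del^-1).
  have hj : (j.+1%:R)^-1 < del.
    rewrite invf_plt ?posrE //; exact: truncnS_gt.
  have [z zl hz] := Hl j c.
  exists j => //; exists (index z (l j)) => //; exists C; split => //.
  rewrite nth_index //; apply: bC => s hs; apply: Hdel => //.
  by rewrite (dprod_sym dm); apply: lt_trans hz hj.
by move=> [j _ [i _ [C [SC _ Cp]]]]; exists C.
Qed.

End Cells.
Arguments pflow_meas {R X d f}. Arguments net {R X d f}. Arguments cells_meas {R X d f}.


Theorem proposition4p7 (R : realType) (X : pointedType) (d : X -> X -> R)
  (f : R -> X -> X)
  (nu : probability (g_sigma_algebraType (Borel2 d)) R)
  (eps gamma : R)
  (E : R -> set (X * X)) (A : R -> set (set (X * X)))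
  (Q : set (g_sigma_algebraType (Borel2 d))) :
  is_metric d -> dcompact d -> is_cont_flow d f ->
  (forall t (B : set (g_sigma_algebraType (Borel2 d))), measurable B ->
     nu ((pflow f t) @^-1` B) = nu B) ->
  nu.-negligible (NEx d f eps : set (g_sigma_algebraType (Borel2 d))) ->
  0 < gamma -> gamma < eps / 2 ->
  (forall t, 0 < t -> max_separated d f t gamma (E t) /\
     adapted d f t gamma (E t) (A t) /\
     (forall B, A t B -> measurable (B : set (g_sigma_algebraType (Borel2 d))))) ->
  measurable Q ->
  (forall t s, [set (f t p.1, f s p.2) | p in Q] = Q) ->
  forall alpha : R, 0 < alpha ->
  exists t0 : R, forall t : R, 0 < t -> t0 <= t ->
    exists2 S : set (set (X * X)), S `<=` A t &
      (nu ((\bigcup_(B in S) B) `\` Q `|` (Q `\` \bigcup_(B in S) B)) < alpha%:E)%E.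
Proof.
move=> dm dc fl Hinv Hneg g0 g_eps HA mQ HQ alpha a0.
have Qinv : forall t p, Q (pflow f t p) <-> Q p.
  move=> t [x y]; split => h.
  - rewrite -(HQ (- t) (- t)); exists (pflow f t (x, y)) => //.
    by rewrite /pflow /= !(fK dm fl).
  - by rewrite -(HQ t t); exists (x, y).
have Qseg : forall p a b, Q (f a p.1, f b p.2) -> Q p.
  move=> [x y] a b h; rewrite -(HQ (- a) (- b)); exists (f a x, f b y) => //=.
  by rewrite !(fK dm fl).
pose c := (2 * gamma + eps) / 2.
have hc1 : 2 * gamma < c by rewrite /c; lra.
have hc2 : c < eps by rewrite /c; lra.
have a20 : 0 < alpha / 2 by rewrite divr_gt0.
have [K [hK KQ hKQ]] := inner_reg dm nu Q (alpha / 2) mQ a20.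
have [N0 [mN0 nuN0 NEN0]] := Hneg.
pose Z (n : nat) : set (g_sigma_algebraType (Borel2 d)) :=
  (~` Q) `&` Hset d f K c n%:R `\` N0.
have mZ n : measurable (Z n).
  apply: measurableD => //; apply: measurableI; first exact: measurableC.
  apply: (open_meas dm). apply: (Hset_open dm dc fl).
have decZ n : Z n.+1 `<=` Z n.
  move=> p [[nQ hH] nN]; split => //; split => //.
  by apply: (Hset_mono dm dc fl K c _ _ _ _ hH); rewrite ler_nat.
have capZ : \bigcap_n Z n = set0.
  apply/seteqP; split; last exact: sub0set.
  move=> p /= H.
  have [[nQ _] nN] := H 0%N I.
  have Hn : forall n : nat, exists k, K k /\ forall s, - n%:R <= s <= n%:R ->
      dprod d (pflow f s p) (pflow f s k) <= c.
    move=> n; have [[_ [k [Kk [r rc Hr]]]] _] := H n I.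
    exists k; split => // s hs; apply: le_trans (Hr s hs) _; exact: ltW.
  have [k [Kk Hk]] := limit_K dm dc fl K p c hK Hn.
  have nNE : ~ NEx d f eps p by move=> /NEN0.
  have [s s0 Hs] : exists2 s, 0 < s &
      Gamma d f eps p `<=` orbseg f s p.1 `*` orbseg f s p.2.
    apply: contrapT => hno; apply: nNE => s s0 hs; apply: hno; by exists s.
  have Gk : Gamma d f eps p k by move=> u; apply: le_lt_trans (Hk u) hc2.
  have [[r1 _ e1] [r2 _ e2]] := Hs k Gk.
  apply: nQ; apply: (Qseg p r1 r2); rewrite -e1 -e2 -surjective_pairing.
  exact: KQ.
have [n0 Hn0] := ev_small dm nu Z (alpha / 2) mZ decZ capZ a20.
exists (2 * n0%:R) => t t0 tt0.
pose tau := t / 2.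
have ntau : n0%:R <= tau by rewrite /tau; lra.
have [_ [adp cm]] := HA t t0.
pose Sel := [set C | A t C /\ exists q, C q /\ K (pflow f tau q)].
exists Sel; first by move=> C [].
pose V := \bigcup_(C in Sel) C.
have mV : measurable (V : set (g_sigma_algebraType (Borel2 d))).
  exact: (cells_meas dm dc fl (A t) (E t) t gamma Sel g0 adp cm (fun C h => proj1 h)).
pose Y : set (g_sigma_algebraType (Borel2 d)) := V `\` Q `|` (Q `\` V).
have mY : measurable Y.
  by apply: measurableU; apply: measurableD.
rewrite -/V -/Y -(Hinv (- tau) _ mY).
have msub := pflow_meas dm dc fl (- tau) Y mY.
have sub : pflow f (- tau) @^-1` Y `<=` (Q `\` K) `|` Z n0 `|` N0.
  move=> ph /= [[Vp nQ] | [Qp nV]].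
  - case: (pselect (N0 ph)) => hN; first by right.
    left; right; split => //; split.
      by move=> Qph; apply: nQ; apply/(Qinv (- tau) ph).
    case: Vp => C [AC [q [Cq Kq]]] Cp.
    exists (pflow f tau q); split => //; exists (2 * gamma) => // s hs.
    have [c0 Ec0 [_ Ccb]] := (proj2 adp) C AC.
    rewrite -{1}(pflowKV dm fl tau ph) (pflowD dm fl s tau (pflow f (- tau) ph)) (pflowD dm fl s tau q).
    set p := pflow f (- tau) ph.
    have hu : 0 <= s + tau <= t.
      move: hs => /andP[hs1 hs2]; move: ntau hs1 hs2; rewrite /tau.
      set m := (n0%:R : R) => hn hs1 hs2.
      by apply/andP; split; lra.
    have h1 := Ccb p Cp (s + tau) hu.
    have h2 := Ccb q Cq (s + tau) hu.
    apply: le_trans (dprod_tri dm _ (pflow f (s + tau) c0) _) _.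
    rewrite (dprod_sym dm (pflow f (s + tau) p)); lra.
  - left; left; split; first by apply/(Qinv (- tau) ph).
    move=> Kph; apply: nV.
    have [[_ Pcov] _] := adp.
    have [C AC Cp] := Pcov (pflow f (- tau) ph).
    exists C => //; split => //; exists (pflow f (- tau) ph); split => //.
    by rewrite (pflowKV dm fl).
have mQK : measurable (Q `\` K : set (g_sigma_algebraType (Borel2 d))).
  by apply: measurableD => //; apply: (closed_meas dm); exact: hK.
apply: le_lt_trans (nu_le dm nu _ _ msub _ sub) _.
  by apply: measurableU => //; apply: measurableU.
apply: le_lt_trans (measureU2 nu _ mN0) _; first by apply: measurableU.
rewrite [W0 in (_ + W0 < _)%E](_ : _ = 0%E); last exact: nuN0.
rewrite adde0.
apply: le_lt_trans (measureU2 nu mQK (mZ n0)) _.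
have -> : alpha = alpha / 2 + alpha / 2 by lra.
by rewrite EFinD; apply: lteD.
Qed.
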